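(* Let $\Gamma,P,\mu$ be real numbers with $0\le\Gamma<1$ and $0\le P\le1$, and set \[ B_G^{(2)}:=[-4\Gamma P+2P-2\Gamma+3]+\mu[3-2\Gamma-4P]. \] (i) If $-1/3<\mu<0$ and $|2\Gamma-1|\le\min\{1,(1-P)/P\}$, then $B_G^{(2)}>0$. (ii) If $\mu=0$ and $|2\Gamma-1|<\min\{1,(1-P)/P\}$, then $B_G^{(2)}>0$. Here $(1-P)/P$ is interpreted as $+\infty$ when $P=0$.
   Context: In the application, $\Gamma=\Gamma(k)\in[0,1]$ is the fraction of the potential enstrophy spectrum at wavenumber $k$ contained in the upper layer, $P=P(k)\in[0,1]$ is the fraction of the energy spectrum at $k$ that is baroclinic, and $\mu$ is the Ekman extrapolation parameter; $B_G^{(2)}$ is a coefficient in the potential enstrophy dissipation rate spectrum of the asymmetric Ekman term. *)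

(* Defs.v *)
From Stdlib Require Import Reals.
Open Scope R_scope.

Definition BG2 (G P mu : R) : R :=
  (-4 * G * P + 2 * P - 2 * G + 3) + mu * (3 - 2 * G - 4 * P).

(* min{1, (1-P)/P}, with (1-P)/P read as +oo when P = 0 (so the min is 1). *)
Definition min_bound (P : R) : R :=
  if Req_EM_T P 0 then 1 else Rmin 1 ((1 - P) / P).

(* Main.v *)
Require Import Defs.
From Stdlib Require Import Reals Lra Psatz.
Open Scope R_scope.

Lemma key (G P : R) : 0 <= G < 1 -> 0 <= P <= 1 ->
  forall b, Rabs (2 * G - 1) <= b -> b = min_bound P ->
  (-1 <= 2*G-1 <= 1 /\ (2*G-1) * P <= 1 - P /\ -(2*G-1) * P <= 1 - P).
Proof.
  intros HG HP b Hb ->. unfold min_bound in Hb.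
  destruct (Req_EM_T P 0) as [->|HP0].
  - assert (Hx1 := Rle_abs (2*G-1)); assert (Hx2 := Rabs_Ropp (2*G-1)); assert (Hx3 := Rle_abs (-(2*G-1))). lra.
  - assert (h1 := Rmin_l 1 ((1-P)/P)). assert (h2 := Rmin_r 1 ((1-P)/P)).
    assert (Pp : 0 < P) by lra.
    assert (E : (1-P)/P * P = 1 - P) by (field; lra).
    assert (Hx1 := Rle_abs (2*G-1)); assert (Hx2 := Rabs_Ropp (2*G-1)); assert (Hx3 := Rle_abs (-(2*G-1))). repeat split; try lra; nra.
Qed.

Theorem proposition5 (G P mu : R) :
  0 <= G < 1 -> 0 <= P <= 1 ->
  ((-1/3 < mu < 0 -> Rabs (2 * G - 1) <= min_bound P -> BG2 G P mu > 0) /\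
   (mu = 0 -> Rabs (2 * G - 1) < min_bound P -> BG2 G P mu > 0)).
Proof.
  intros HG HP. split.
  - intros Hmu Hb. destruct (key G P HG HP _ Hb eq_refl) as [[a b] [c d]].
    unfold BG2.
    assert (A : 0 <= 2 - (2*G-1)*(1+2*P)) by nra.
    assert (B : 0 < 2 - (2*G-1)*(1+2*P) - (2 - (2*G-1) - 4*P)/3).
    { destruct (Rle_dec P (1/2)); nra. }
    nra.
  - intros -> Hb. unfold BG2.
    unfold min_bound in Hb. destruct (Req_EM_T P 0) as [->|HP0].
    + assert (Hx1 := Rle_abs (2*G-1)); assert (Hx2 := Rabs_Ropp (2*G-1)); assert (Hx3 := Rle_abs (-(2*G-1))). lra.
    + assert (h1 := Rmin_l 1 ((1-P)/P)). assert (h2 := Rmin_r 1 ((1-P)/P)).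
      assert (Pp : 0 < P) by lra.
      assert (E : (1-P)/P * P = 1 - P) by (field; lra).
      assert (Hx1 := Rle_abs (2*G-1)); assert (Hx2 := Rabs_Ropp (2*G-1)); assert (Hx3 := Rle_abs (-(2*G-1))). nra.
Qed.
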